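(* The category $\mathbf{AlgFrm}$ of algebraic frames and coherent frame homomorphisms is dually equivalent to the category $\mathbf{AlgLPries}$ of algebraic L-spaces and coherent L-morphisms.
   Context: A frame is a complete lattice satisfying $a\wedge\bigvee S=\bigvee\{a\wedge s\mid s\in S\}$; frame homomorphisms preserve finite meets and arbitrary joins. In a frame $L$, $a\ll b$ means whenever $b\le\bigvee S$ there is finite $T\subseteq S$ with $a\le\bigvee T$; $a$ is compact if $a\ll a$; $K(L)$ is the set of compact elements. $L$ is algebraic if $a=\bigvee\{b\in K(L)\mid b\le a\}$ for all $a$. A frame homomorphism is coherent if it maps compact elements to compact elements. A Priestley space is a Stone space $X$ with a partial order such that clopen upsets separate points. An L-space is a Priestley space in which the downset of each clopen set is clopen and the closure of each open upset is open. ${\sf ClopUp}(X)$ is the set of clopen upsets; $\mathrm{cl}$ denotes closure. An L-morphism is a continuous order-preserving map $f:X\to X'$ between L-spaces with $f^{-1}(\mathrm{cl}\,U)=\mathrm{cl}\,f^{-1}(U)$ for every open upset $U$ of $X'$. The spatial part of $X$ is $Y=\{y\in X\mid{\downarrow}y\text{ clopen}\}$. A Scott upset is a closed upset $F$ with $\min F\subseteq Y$; ${\sf ClopSUp}(X)$ is the set of clopen Scott upsets; $\mathrm{core}\,U=\bigcup\{V\in{\sf ClopSUp}(X)\mid V\subseteq U\}$ for $U\in{\sf ClopUp}(X)$. $X$ is an algebraic L-space if $\mathrm{core}\,U$ is dense in $U$ for each $U\in{\sf ClopUp}(X)$. An L-morphism $f:X_1\to X_2$ is coherent if $f^{-1}(\mathrm{core}\,U)\subseteq\mathrm{core}\,f^{-1}(U)$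 for all $U\in{\sf ClopUp}(X_2)$. *)

(* Defs.v *)
From mathcomp Require Import all_boot all_order.
From mathcomp Require Import all_classical.
From mathcomp Require Import topology.

Set Implicit Arguments.
Unset Strict Implicit.
Unset Printing Implicit Defensive.

Local Open Scope classical_set_scope.

Record frame := Frame {
  fcar :> Type;
  fle : fcar -> fcar -> Prop;
  fjoin : set fcar -> fcar;
  fmeet : fcar -> fcar -> fcar;
  ftop : fcar;
  fle_refl : forall a, fle a a;
  fle_anti : forall a b, fle a b -> fle b a -> a = b;
  fle_trans : forall a b c, fle a b -> fle b c -> fle a c;
  fjoin_ub : forall (S : set fcar) s, S s -> fle s (fjoin S);
  fjoin_least : forall (S : set fcar) b,
      (forall s, S s -> fle s b) -> fle (fjoin S) b;
  fmeet_lbl : forall a b, fle (fmeet a b) a;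
  fmeet_lbr : forall a b, fle (fmeet a b) b;
  fmeet_greatest : forall a b c, fle c a -> fle c b -> fle c (fmeet a b);
  ftop_greatest : forall a, fle a ftop;
  frame_distr : forall a (S : set fcar),
      fmeet a (fjoin S) = fjoin [set fmeet a s | s in S]
}.

Section FrameDefs.
Variable L : frame.

Definition way_below (a b : L) : Prop :=
  forall S : set L, fle b (fjoin S) ->
    exists T : set L, [/\ finite_set T, T `<=` S & fle a (fjoin T)].

Definition fcompact (a : L) : Prop := way_below a a.

Definition Kel : set L := [set a | fcompact a].

Definition algebraic_frame : Prop :=
  forall a : L, a = fjoin [set b | Kel b /\ fle b a].
End FrameDefs.

Definition frame_hom (L M : frame) (h : L -> M) : Prop :=
  [/\ forall a b, h (fmeet a b) = fmeet (h a) (h b),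
      h (ftop L) = ftop M &
      forall S : set L, h (fjoin S) = fjoin (h @` S)].

Definition coherent_frame_hom (L M : frame) (h : L -> M) : Prop :=
  frame_hom h /\ forall a, fcompact a -> fcompact (h a).

Record otop := OTop {
  ocar :> topologicalType;
  ole : ocar -> ocar -> Prop;
  ole_refl : forall x, ole x x;
  ole_anti : forall x y, ole x y -> ole y x -> x = y;
  ole_trans : forall x y z, ole x y -> ole y z -> ole x z
}.

Section OTopDefs.
Variable X : otop.

Definition upset (U : set X) : Prop := forall x y, U x -> ole x y -> U y.
Definition downset_of (U : set X) : set X := [set x | exists2 u, U u & ole x u].

Definition stone_space : Prop :=
  [/\ compact [set: X], hausdorff_space X & totally_disconnected [set: X]].

Definition priestley_space : Prop :=
  stone_space /\
  forall x y : X, ~ ole x y ->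
    exists U : set X, [/\ clopen U, upset U, U x & ~ U y].

Definition L_space : Prop :=
  [/\ priestley_space,
      (forall U : set X, clopen U -> clopen (downset_of U)) &
      (forall U : set X, open U -> upset U -> open (closure U))].

Definition ClopUp : set (set X) := [set U | clopen U /\ upset U].

Definition spatial_part : set X := [set y | clopen (downset_of [set y])].

Definition minimals (F : set X) : set X :=
  [set x | F x /\ forall z, F z -> ole z x -> z = x].

Definition scott_upset (F : set X) : Prop :=
  [/\ closed F, upset F & minimals F `<=` spatial_part].

Definition ClopSUp : set (set X) := [set U | clopen U /\ scott_upset U].

Definition core (U : set X) : set X :=
  \bigcup_(V in [set V | ClopSUp V /\ V `<=` U]) V.

Definition algebraic_L_space : Prop :=
  L_space /\ forall U, ClopUp U -> U `<=` closure (core U).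
End OTopDefs.

Definition order_preserving (X1 X2 : otop) (f : X1 -> X2) : Prop :=
  forall x y, ole x y -> ole (f x) (f y).

Definition L_morphism (X1 X2 : otop) (f : X1 -> X2) : Prop :=
  [/\ continuous f, order_preserving f &
      forall U : set X2, open U -> upset U ->
        f @^-1` (closure U) = closure (f @^-1` U)].

Definition coherent_L_morphism (X1 X2 : otop) (f : X1 -> X2) : Prop :=
  L_morphism f /\
  forall U : set X2, ClopUp U -> f @^-1` (core U) `<=` core (f @^-1` U).

Record AlgFrm := AlgFrmOb { af_frame :> frame; af_alg : algebraic_frame af_frame }.
Definition AlgFrm_hom (L M : AlgFrm) :=
  {h : af_frame L -> af_frame M | coherent_frame_hom h}.

Record AlgLPries := AlgLPriesOb { al_space :> otop; al_alg : algebraic_L_space al_space }.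
Definition AlgLPries_hom (X Y : AlgLPries) :=
  {f : al_space X -> al_space Y | coherent_L_morphism f}.

Definition AlgFrm_iso (L M : AlgFrm) (h : AlgFrm_hom L M) : Prop :=
  exists g : AlgFrm_hom M L,
    (forall a, proj1_sig g (proj1_sig h a) = a) /\
    (forall b, proj1_sig h (proj1_sig g b) = b).

Definition AlgLPries_iso (X Y : AlgLPries) (f : AlgLPries_hom X Y) : Prop :=
  exists g : AlgLPries_hom Y X,
    (forall x, proj1_sig g (proj1_sig f x) = x) /\
    (forall y, proj1_sig f (proj1_sig g y) = y).

(* Morphisms are
   compared through their underlying functions (extensionally). *)
Definition dually_equivalent_AlgFrm_AlgLPries : Prop :=
  exists (Fo : AlgFrm -> AlgLPries)
         (Fm : forall L M : AlgFrm, AlgFrm_hom L M -> AlgLPries_hom (Fo M) (Fo L))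
         (Go : AlgLPries -> AlgFrm)
         (Gm : forall X Y : AlgLPries, AlgLPries_hom X Y -> AlgFrm_hom (Go Y) (Go X))
         (eta : forall L : AlgFrm, AlgFrm_hom L (Go (Fo L)))
         (eps : forall X : AlgLPries, AlgLPries_hom X (Fo (Go X))),
  [/\
      ((forall (L : AlgFrm) (i : AlgFrm_hom L L),
         (forall a, proj1_sig i a = a) ->
         forall x, proj1_sig (Fm L L i) x = x)
      /\ (forall (L M N : AlgFrm) (h : AlgFrm_hom L M) (k : AlgFrm_hom M N)
              (kh : AlgFrm_hom L N),
         (forall a, proj1_sig kh a = proj1_sig k (proj1_sig h a)) ->
         forall x, proj1_sig (Fm L N kh) x
                   = proj1_sig (Fm L M h) (proj1_sig (Fm M N k) x))),
      ((forall (X : AlgLPries) (i : AlgLPries_hom X X),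
         (forall x, proj1_sig i x = x) ->
         forall a, proj1_sig (Gm X X i) a = a)
      /\ (forall (X Y Z : AlgLPries) (f : AlgLPries_hom X Y) (g : AlgLPries_hom Y Z)
              (gf : AlgLPries_hom X Z),
         (forall x, proj1_sig gf x = proj1_sig g (proj1_sig f x)) ->
         forall a, proj1_sig (Gm X Z gf) a
                   = proj1_sig (Gm X Y f) (proj1_sig (Gm Y Z g) a))),
      (forall L : AlgFrm, AlgFrm_iso (eta L)) /\
      (forall (L M : AlgFrm) (h : AlgFrm_hom L M) a,
         proj1_sig (eta M) (proj1_sig h a)
         = proj1_sig (Gm _ _ (Fm L M h)) (proj1_sig (eta L) a)) &
      (forall X : AlgLPries, AlgLPries_iso (eps X)) /\
      (forall (X Y : AlgLPries) (f : AlgLPries_hom X Y) x,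
         proj1_sig (eps Y) (proj1_sig f x)
         = proj1_sig (Fm _ _ (Gm X Y f)) (proj1_sig (eps X) x))].

(* Main.v *)
Require Import Defs.
From HB Require Import structures.
From mathcomp Require Import all_boot all_order.
From mathcomp Require Import all_classical.
From mathcomp Require Import finmap topology.

Set Implicit Arguments.
Unset Strict Implicit.
Unset Printing Implicit Defensive.

Local Open Scope classical_set_scope.


Lemma sig_eq (T : Type) (P : T -> Prop) (a b : {x | P x}) :
  proj1_sig a = proj1_sig b -> a = b.
Proof.
case: a b => [a pa] [b pb] /= eab; subst b; congr exist; exact: Prop_irrelevance.
Qed.

Definition chT (T : Type) : Type := T.
HB.instance Definition _ (T : Type) := gen_eqMixin (chT T).
HB.instance Definition _ (T : Type) := gen_choiceMixin (chT T).

Lemma fin_ind (T : Type) (P : set T -> Prop) :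
  P set0 -> (forall x A, P A -> P (x |` A)) ->
  forall A, finite_set A -> P A.
Proof.
move=> P0 PU A finA.
have /finite_fsetP [X AX] : finite_set (A : set (chT T)) by [].
rewrite AX; clear AX finA A.
have -> : [set` X] = [set x : chT T | x \in finmap.enum_fset X] by [].
elim: (finmap.enum_fset X) => [|y s IH].
  by have -> : [set x : chT T | x \in [::]] = set0 by apply/seteqP; split.
have -> : [set x : chT T | x \in y :: s] = y |` [set x : chT T | x \in s].
  apply/seteqP; split => x /=; rewrite in_cons.
    by case/orP => [/eqP ->|]; [left|right].
  by case => [->|->]; rewrite ?eqxx ?orbT.
exact: PU.
Qed.

Section Compact.
Variable T : topologicalType.

Lemma cover_dir (K : set T) (O : set (set T)) :
  compact K -> (forall o, O o -> open o) -> K `<=` \bigcup_(o in O) o ->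
  (exists o, O o) ->
  (forall o1 o2, O o1 -> O o2 -> exists2 o3, O o3 & o1 `|` o2 `<=` o3) ->
  exists2 o, O o & K `<=` o.
Proof.
move=> cK Oop cov [o0 Oo0] dir.
apply: contrapT => nex.
have ne : forall o, O o -> (K `\` o) !=set0.
  move=> o Oo; apply: contrapT => /set0P/negP; rewrite negbK => /eqP e.
  apply: nex; exists o => // x Kx; apply: contrapT => nox.
  have : (K `\` o) x by split.
  by rewrite e.
have FF : Filter (filter_from O (fun o => K `\` o)).
  apply: filter_from_filter; first by exists o0.
  move=> i j Oi Oj; have [k Ok sk] := dir _ _ Oi Oj.
  exists k => // x [Kx nkx]; split; split => // ?; apply: nkx; apply: sk; by [left|right].
have PF : ProperFilter (filter_from O (fun o => K `\` o)).
  exact: filter_from_proper.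
have [p [Kp clp]] := cK _ PF (ltac:(exists o0 => //; by move=> x [])).
have [o Oo op] := cov _ Kp.
have nbo : nbhs p o by apply: open_nbhs_nbhs; split => //; exact: Oop.
have [x [[_ nox] ox]] := clp (K `\` o) o (ltac:(by exists o)) nbo.
by [].
Qed.

Lemma fip (K : set T) (C : set (set T)) :
  compact K -> (forall c, C c -> closed c) -> (exists c, C c) ->
  (forall c1 c2, C c1 -> C c2 -> exists2 c3, C c3 & c3 `<=` c1 `&` c2) ->
  (forall c, C c -> K `&` c !=set0) ->
  exists2 x, K x & forall c, C c -> c x.
Proof.
move=> cK Ccl [c0 Cc0] dir ne.
apply: contrapT => nex.
have h1 : forall o, [set ~` c | c in C] o -> open o.
  by move=> _ [c Cc <-]; rewrite openC; apply: Ccl.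
have h2 : K `<=` \bigcup_(o in [set ~` c | c in C]) o.
  move=> x Kx; apply: contrapT => nc; apply: nex; exists x => // c Cc.
  apply: contrapT => ncx; apply: nc; exists (~` c) => //; by exists c.
have h3 : exists o, [set ~` c | c in C] o by exists (~` c0); exists c0.
have h4 : forall o1 o2, [set ~` c | c in C] o1 -> [set ~` c | c in C] o2 ->
   exists2 o3, [set ~` c | c in C] o3 & o1 `|` o2 `<=` o3.
  move=> _ _ [c1 C1 <-] [c2 C2 <-]; have [c3 C3 s3] := dir _ _ C1 C2.
  exists (~` c3); first by exists c3.
  move=> x hx c3x; have [a b] := s3 x c3x; by case: hx.
have [o [c Cc <-] Ko] := cover_dir cK h1 h2 h3 h4.
have [x [Kx cx]] := ne _ Cc.
exact: Ko Kx cx.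
Qed.

End Compact.


Lemma openP (T : topologicalType) (A : set T) :
  (forall x, A x -> exists2 B, open B /\ B x & B `<=` A) -> open A.
Proof.
move=> h; rewrite openE => x Ax; have [B [oB Bx] sBA] := h x Ax.
rewrite /interior /=; apply: (filterS sBA); apply: open_nbhs_nbhs; by split.
Qed.

Lemma nbhsP (T : topologicalType) (p : T) (A : set T) :
  nbhs p A <-> exists2 B, open B /\ B p & B `<=` A.
Proof.
rewrite nbhsE /=; split => [[B [oB Bp] sBA]|[B [oB Bp] sBA]]; exists B => //.
Qed.

Lemma closureP (T : topologicalType) (A : set T) (x : T) :
  closure A x <-> forall B, open B -> B x -> exists y, A y /\ B y.
Proof.
split => [h B oB Bx|h B /nbhsP [B' [oB' B'x] sB]].
  have [y [Ay By]] := h B (open_nbhs_nbhs (conj oB Bx)); by exists y.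
have [y [Ay By]] := h B' oB' B'x; exists y; split => //; exact: sB.
Qed.

Lemma closed_closure_eq (T : topologicalType) (A : set T) :
  closed A -> closure A = A.
Proof. by move=> /closure_id <-. Qed.

Section Priestley.
Variable X : otop.

Lemma cu_T : @ClopUp X setT.
Proof. split; [exact: clopenT| by []]. Qed.
Lemma cu_0 : @ClopUp X set0.
Proof. split; [exact: clopen0| by []]. Qed.
Lemma cu_I U V : @ClopUp X U -> @ClopUp X V -> @ClopUp X (U `&` V).
Proof.
move=> [cU uU] [cV uV]; split; first exact: clopenI.
by move=> x y [Ux Vx] xy; split; [exact: uU Ux xy| exact: uV Vx xy].
Qed.
Lemma cu_U U V : @ClopUp X U -> @ClopUp X V -> @ClopUp X (U `|` V).
Proof.
move=> [cU uU] [cV uV]; split; first exact: clopenU.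
by move=> x y [Ux|Vx] xy; [left; exact: uU Ux xy| right; exact: uV Vx xy].
Qed.

Hypothesis hP : priestley_space X.

Lemma pr_compact : compact [set: X].
Proof. by case: hP => [[]]. Qed.

Lemma pr_sep x y : ~ ole x y -> exists U, [/\ @ClopUp X U, U x & ~ U y].
Proof. case: hP => _ h /h [U [cU uU Ux nUy]]; exists U; split => //. Qed.

Lemma closed_compact (A : set X) : closed A -> compact A.
Proof. move=> cA; exact: subclosed_compact cA pr_compact _. Qed.

Lemma pr_basis (O : set X) x : open O -> O x ->
  exists V W, [/\ @ClopUp X V, @ClopUp X W, V x, ~ W x & V `\` W `<=` O].
Proof.
move=> oO Ox.
pose Fam := [set C | exists V W,
  [/\ @ClopUp X V, @ClopUp X W, V x, ~ W x & C = ~` V `|` W]].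
have cK : compact (~` O) by apply: closed_compact; exact: open_closedC.
have h1 : forall o, Fam o -> open o.
  move=> _ [V [W [[[_ cV] _] [[oW _] _] _ _ ->]]].
  apply: openU => //; exact: closed_openC.
have h2 : ~` O `<=` \bigcup_(o in Fam) o.
  move=> y nOy.
  have nyx : y <> x by move=> e; apply: nOy; rewrite e.
  have [xy|nxy] := pselect (ole x y).
    have nyx' : ~ ole y x by move=> yx; apply: nyx; exact: ole_anti.
    have [W [cW Wy nWx]] := pr_sep nyx'.
    exists (~` setT `|` W); last by right.
    by exists setT, W; split => //; exact: cu_T.
  have [V [cV Vx nVy]] := pr_sep nxy.
  exists (~` V `|` set0); last by left.
  by exists V, set0; split => //; exact: cu_0.
have h3 : exists o, Fam o.
  by exists (~` setT `|` set0); exists setT, set0; split => //; [exact: cu_T|exact: cu_0].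
have h4 : forall o1 o2, Fam o1 -> Fam o2 -> exists2 o3, Fam o3 & o1 `|` o2 `<=` o3.
  move=> _ _ [V1 [W1 [cV1 cW1 V1x W1x ->]]] [V2 [W2 [cV2 cW2 V2x W2x ->]]].
  exists (~` (V1 `&` V2) `|` (W1 `|` W2)).
    exists (V1 `&` V2), (W1 `|` W2); split => //; [exact: cu_I|exact: cu_U|by case].
  move=> z [[nV1|W1z]|[nV2|W2z]].
  - by left => -[].
  - by right; left.
  - by left => -[].
  - by right; right.
have [_ [V [W [cV cW Vx nWx ->]]] sub] := cover_dir cK h1 h2 h3 h4.
exists V, W; split => // z [Vz nWz]; apply: contrapT => nOz.
by case: (sub z nOz).
Qed.

Lemma pr_down_closed (A : set X) : closed A -> closed (@downset_of X A).
Proof.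
move=> cA; rewrite -[@downset_of X A]setCK closedC; apply: openP => y ny.
pose Fam := [set C | exists V, [/\ @ClopUp X V, V y & C = ~` V]].
have h1 : forall o, Fam o -> open o.
  by move=> _ [V [[[_ cV] _] _ ->]]; exact: closed_openC.
have h2 : A `<=` \bigcup_(o in Fam) o.
  move=> k Ak; have nyk : ~ ole y k by move=> yk; apply: ny; exists k.
  have [V [cV Vy nVk]] := pr_sep nyk.
  by exists (~` V) => //; exists V.
have h3 : exists o, Fam o by exists (~` setT); exists setT; split => //; exact: cu_T.
have h4 : forall o1 o2, Fam o1 -> Fam o2 -> exists2 o3, Fam o3 & o1 `|` o2 `<=` o3.
  move=> _ _ [V1 [cV1 V1y ->]] [V2 [cV2 V2y ->]].
  exists (~` (V1 `&` V2)); first by exists (V1 `&` V2); split => //; exact: cu_I.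
  by move=> z [n1|n2] [a b]; [exact: n1|exact: n2].
have [_ [V [[[oV _] uV] Vy ->]] sub] := cover_dir (closed_compact cA) h1 h2 h3 h4.
exists V; first by split.
move=> z Vz [k Ak zk]; apply: (sub k Ak); exact: uV Vz zk.
Qed.

Lemma pr_down1_closed x : closed (@downset_of X [set x]).
Proof.
have -> : @downset_of X [set x] = \bigcap_(V in [set V | @ClopUp X V /\ ~ V x]) ~` V.
  apply/seteqP; split.
    move=> y [_ -> yx] V [[_ uV] nVx] Vy; apply: nVx; exact: uV Vy yx.
  move=> y hy; apply: contrapT => nyx.
  have nyx' : ~ ole y x by move=> yx; apply: nyx; exists x.
  have [V [cV Vy nVx]] := pr_sep nyx'.
  by apply: (hy V).
apply: closed_bigI => V [[[oV _] _] _]; exact: open_closedC.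
Qed.

Lemma pr_minimal (F : set X) x : closed F -> F x ->
  exists m, @minimals X F m /\ ole m x.
Proof.
move=> cF Fx.
pose S := {y : X | F y /\ ole y x}.
pose R := fun a b : S => `[< ole (proj1_sig b) (proj1_sig a) >].
have Rrefl : forall t, R t t by move=> t; apply/asboolP; exact: ole_refl.
have Rtrans : forall r s t, R r s -> R s t -> R r t.
  by move=> r s t /asboolP rs /asboolP st; apply/asboolP; exact: ole_trans st rs.
have Ranti : forall s t, R s t -> R t s -> s = t.
  by move=> s t /asboolP st /asboolP ts; apply: sig_eq; exact: ole_anti.
have Rch : forall A : set S, total_on A R -> exists t, forall s, A s -> R s t.
  move=> A totA.
  have [[a Aa]|A0] := pselect (exists a, A a); last first.
    exists (exist _ x (conj Fx (ole_refl x))) => s As; by case: A0; exists s.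
  pose C := [set c | exists s, A s /\ c = F `&` @downset_of X [set proj1_sig s]].
  have [m _ hm] : exists2 m, [set: X] m & forall c, C c -> c m.
    apply: (fip pr_compact).
    - move=> _ [s [_ ->]]; apply: closedI => //; exact: pr_down1_closed.
    - by exists (F `&` @downset_of X [set proj1_sig a]); exists a.
    - move=> _ _ [s1 [As1 ->]] [s2 [As2 ->]].
      have [/asboolP s21|/asboolP s12] := totA _ _ As1 As2.
        exists (F `&` @downset_of X [set proj1_sig s2]); first by exists s2.
        move=> z [Fz [_ -> zs2]]; split; split => //.
          by exists (proj1_sig s1) => //; exact: ole_trans zs2 s21.
        by exists (proj1_sig s2).
      exists (F `&` @downset_of X [set proj1_sig s1]); first by exists s1.
      move=> z [Fz [_ -> zs1]]; split; split => //.
        by exists (proj1_sig s1).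
      by exists (proj1_sig s2) => //; exact: ole_trans zs1 s12.
    - move=> _ [s [_ ->]]; exists (proj1_sig s); split => //; split.
        by case: (proj2_sig s).
      by exists (proj1_sig s) => //; exact: ole_refl.
  have Fm : F m by have [] := hm _ (ex_intro _ a (conj Aa erefl)).
  have mA : forall s, A s -> ole m (proj1_sig s).
    by move=> s As; have [_ [_ -> ms]] := hm _ (ex_intro _ s (conj As erefl)).
  have mx : ole m x by apply: ole_trans (mA a Aa) _; case: (proj2_sig a).
  exists (exist _ m (conj Fm mx)) => s As; apply/asboolP; exact: mA.
have [[t [Ft tx]] ht] := Zorn Rrefl Rtrans Ranti Rch.
exists t; split => //; split => // z Fz zt.
have zx : ole z x by exact: ole_trans zt tx.
have := ht (exist _ z (conj Fz zx)) (ltac:(apply/asboolP; exact: zt)).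
by move=> /(congr1 (@proj1_sig _ _)).
Qed.

End Priestley.

Section LSpace.
Variable X : otop.
Hypothesis hL : L_space X.

Lemma ls_pr : priestley_space X. Proof. by case: hL. Qed.

Lemma ls_closure_upset (U : set X) : upset U -> upset (closure U).
Proof.
move=> uU x y clx xy; apply/closureP => B oB By.
have [V [W [[[oV cV] _] [[oW cW] _] Vy nWy sub]]] := pr_basis ls_pr oB By.
have cC : clopen (V `&` ~` W).
  exact: (clopenI (conj oV cV) (@clopenC _ W W (conj oW cW))).
have [_ hD _] := hL.
have cD : clopen (@downset_of X (V `&` ~` W)) by exact: hD.
have [u [Uu [c [Vc nWc] uc]]] := (closureP _ _).1 clx _ (proj1 cD)
  (ex_intro2 _ _ y (conj Vy nWy) xy).
exists c; split; first exact: uU Uu uc.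
exact: sub.
Qed.

Lemma ls_closure_cu (U : set X) : open U -> upset U -> @ClopUp X (closure U).
Proof.
move=> oU uU; split; last exact: ls_closure_upset.
split; last exact: closed_closure.
have [_ _ h] := hL; exact: h.
Qed.

End LSpace.


Lemma closed_fin_bigcup (T : topologicalType) (I : Type) (f : I -> set T) (A : set I) :
  finite_set A -> (forall i, A i -> closed (f i)) -> closed (\bigcup_(i in A) f i).
Proof.
move=> fA; pattern A; apply: (fin_ind _ _ fA) => [|x B IH] h.
  by rewrite bigcup_set0; exact: closed0.
rewrite bigcup_setU1; apply: closedU; first by apply: h; left.
by apply: IH => i Bi; apply: h; right.
Qed.

Section Go.
Variable X : otop.
Hypothesis hL : L_space X.

Definition GoT := {U : set X | @ClopUp X U}.

Lemma go_join_cu (S : set GoT) :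
  @ClopUp X (closure (\bigcup_(s in S) proj1_sig s)).
Proof.
apply: ls_closure_cu => //.
  by apply: bigcup_open => s _; case: (proj2_sig s) => -[].
by move=> x y [s Ss sx] xy; exists s => //; case: (proj2_sig s) => _ u; exact: u sx xy.
Qed.

Definition go_le (a b : GoT) := proj1_sig a `<=` proj1_sig b.
Definition go_join (S : set GoT) : GoT := exist _ _ (go_join_cu S).
Definition go_meet (a b : GoT) : GoT :=
  exist _ _ (cu_I (proj2_sig a) (proj2_sig b)).
Definition go_top : GoT := exist _ _ (@cu_T X).

Lemma go_closed (a : GoT) : closed (proj1_sig a).
Proof. by case: (proj2_sig a) => -[]. Qed.
Lemma go_open (a : GoT) : open (proj1_sig a).
Proof. by case: (proj2_sig a) => -[]. Qed.
Lemma go_upset (a : GoT) : upset (proj1_sig a).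
Proof. by case: (proj2_sig a). Qed.

Arguments go_closed : clear implicits.
Arguments go_open : clear implicits.
Arguments go_upset : clear implicits.

Lemma go_refl a : go_le a a. Proof. by []. Qed.
Lemma go_anti a b : go_le a b -> go_le b a -> a = b.
Proof. by move=> ab ba; apply: sig_eq; apply/seteqP; split. Qed.
Lemma go_trans a b c : go_le a b -> go_le b c -> go_le a c.
Proof. by move=> ab bc x /ab /bc. Qed.
Lemma go_ub (S : set GoT) s : S s -> go_le s (go_join S).
Proof. by move=> Ss x sx; apply: subset_closure; exists s. Qed.
Lemma go_least (S : set GoT) b : (forall s, S s -> go_le s b) -> go_le (go_join S) b.
Proof.
move=> h; rewrite /go_le /= -(closed_closure_eq (go_closed b)).
by apply: closureS => x [s Ss sx]; exact: h Ss x sx.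
Qed.
Lemma go_lbl a b : go_le (go_meet a b) a. Proof. by move=> x []. Qed.
Lemma go_lbr a b : go_le (go_meet a b) b. Proof. by move=> x []. Qed.
Lemma go_greatest a b c : go_le c a -> go_le c b -> go_le c (go_meet a b).
Proof. by move=> ca cb x cx; split; [exact: ca|exact: cb]. Qed.
Lemma go_top_greatest a : go_le a go_top. Proof. by []. Qed.
Lemma go_distr a (S : set GoT) :
  go_meet a (go_join S) = go_join [set go_meet a s | s in S].
Proof.
apply: sig_eq => /=; apply/seteqP; split.
  move=> x [ax clx]; apply/closureP => B oB Bx.
  have oAB : open (proj1_sig a `&` B) by apply: openI => //; exact: go_open.
  have [y [[s Ss sy] [ay By]]] := (closureP _ _).1 clx _ oAB (conj ax Bx).
  exists y; split => //; exists (go_meet a s) => //; first by exists s.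
move=> x clx; split.
  rewrite -(closed_closure_eq (go_closed a)); apply: (closureS _ clx).
  by move=> y [_ [s Ss <-] [ay _]].
apply: (closureS _ clx); move=> y [_ [s Ss <-] [_ sy]]; by exists s.
Qed.

Definition Go_frame : frame :=
  @Frame GoT go_le go_join go_meet go_top go_refl go_anti go_trans go_ub
    go_least go_lbl go_lbr go_greatest go_top_greatest go_distr.

(* Compactness in Go_frame vs clopen Scott upsets *)

Lemma csu_compact (v : Go_frame) : @ClopSUp X (proj1_sig v) -> fcompact v.
Proof.
move=> [_ [cv uv mv]] S hS.
have sub1 : proj1_sig v `<=` \bigcup_(s in S) proj1_sig s.
  move=> x vx.
  have [m [[vm minm] mx]] := pr_minimal (ls_pr hL) cv vx.
  have sm : @spatial_part X m by apply: mv; split.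
  have clm : closure (\bigcup_(s in S) proj1_sig s) m := hS m vm.
  have [y [[s Ss sy] [_ -> ym]]] := (closureP _ _).1 clm _ (proj1 sm)
     (ex_intro2 _ _ m erefl (ole_refl m)).
  exists s => //; apply: (go_upset s) (ole_trans ym mx); exact: sy.
pose O := [set \bigcup_(s in T) proj1_sig s | T in [set T | finite_set T /\ T `<=` S]].
have h1 : forall o, O o -> open o.
  by move=> _ [T _ <-]; apply: bigcup_open => s _; exact: go_open.
have h2 : proj1_sig v `<=` \bigcup_(o in O) o.
  move=> x /sub1 [s Ss sx]; exists (\bigcup_(t in [set s]) proj1_sig t).
    by exists [set s] => //; split; [exact: finite_set1| by move=> t ->].
  by exists s.
have h3 : exists o, O o.
  by exists (\bigcup_(t in (set0 : set Go_frame)) proj1_sig t); exists set0 => //; split => // t.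
have h4 : forall o1 o2, O o1 -> O o2 -> exists2 o3, O o3 & o1 `|` o2 `<=` o3.
  move=> _ _ [T1 [f1 s1] <-] [T2 [f2 s2] <-].
  exists (\bigcup_(t in T1 `|` T2) proj1_sig t).
    exists (T1 `|` T2) => //; split; first by rewrite finite_setU.
    by move=> t [/s1|/s2].
  by move=> x [[t T1t tx]|[t T2t tx]]; exists t => //; [left|right].
have [_ [T [fT sT] <-] sub] := cover_dir (closed_compact (ls_pr hL) cv) h1 h2 h3 h4.
exists T; split => //.
by move=> x /sub; apply: subset_closure.
Qed.

Lemma core_csu (U : set X) : @ClopUp X U -> U `<=` @core X U -> @ClopSUp X U.
Proof.
move=> [[oU cU] uU] sub; split; first by split.
split => // m [Um minm].
have [V [[_ [_ _ mV]] VU] Vm] := sub m Um.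
apply: mV; split => // z Vz zm; apply: minm => //; exact: VU.
Qed.

Lemma coreE (U : set X) :
  @core X U = \bigcup_(w in [set w : GoT | @ClopSUp X (proj1_sig w) /\ proj1_sig w `<=` U])
                proj1_sig w.
Proof.
apply/seteqP; split.
  move=> x [V [csV VU] Vx].
  have cuV : @ClopUp X V by case: csV => -[oV cV] [_ uV _]; split.
  by exists (exist _ V cuV).
by move=> x [w [csw wU] wx]; exists (proj1_sig w).
Qed.

Hypothesis halg : algebraic_L_space X.

Lemma compact_csu (v : Go_frame) : fcompact v -> @ClopSUp X (proj1_sig v).
Proof.
move=> cv; apply: core_csu; first exact: (proj2_sig v).
pose S := [set w : GoT | @ClopSUp X (proj1_sig w) /\ proj1_sig w `<=` proj1_sig v].
have h : fle v (fjoin (S : set Go_frame)).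
  move=> x vx; have := (proj2 halg) _ (proj2_sig v) x vx.
  by rewrite coreE.
have [T [fT sT vT]] := cv S h.
have cl : closed (\bigcup_(s in T) proj1_sig (s : GoT)).
  by apply: closed_fin_bigcup => // i _; exact: go_closed.
move=> x /vT; rewrite /= (closed_closure_eq cl) => -[t Tt tx].
rewrite coreE; exists t => //; exact: sT.
Qed.

Lemma Go_algebraic : algebraic_frame Go_frame.
Proof.
move=> a; apply: go_anti.
  move=> x ax; have := (proj2 halg) _ (proj2_sig a) x ax.
  apply: closureS => y [V [csV Va] Vy].
  have cuV : @ClopUp X V by case: csV => -[oV cV] [_ uV _]; split.
  exists (exist _ V cuV) => //; split => //; exact: csu_compact.
by apply: go_least => b [].
Qed.

End Go.

Definition Go_alg (X : AlgLPries) : AlgFrm :=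
  @AlgFrmOb (Go_frame (proj1 (al_alg X))) (Go_algebraic (al_alg X)).


Section Gm.
Variables X Y : otop.
Hypotheses (hLX : L_space X) (hLY : L_space Y).
Hypothesis halgY : algebraic_L_space Y.
Variable f : X -> Y.
Hypothesis hf : coherent_L_morphism f.

Lemma gm_cont : continuous f. Proof. by case: hf => -[]. Qed.
Lemma gm_op : order_preserving f. Proof. by case: hf => -[]. Qed.

Lemma gm_cu (u : GoT Y) : @ClopUp X (f @^-1` proj1_sig u).
Proof.
split; first by apply: preimage_clopen; [case: (proj2_sig u)|exact: gm_cont].
move=> x y fx xy; apply: (@go_upset _ u) fx _; exact: gm_op.
Qed.

Definition gm (u : Go_frame hLY) : Go_frame hLX := exist _ _ (gm_cu u).

Lemma gm_hom : coherent_frame_hom gm.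
Proof.
split; first split.
- by move=> a b; apply: sig_eq.
- by apply: sig_eq.
- move=> S; apply: sig_eq => /=.
  have [_ _ hcl] := proj1 hf.
  rewrite hcl; last by move=> x y [s Ss sx] xy; exists s => //; exact: (@go_upset _ s) sx xy.
  + congr closure; apply/seteqP; split.
      by move=> x [s Ss sx]; exists (gm s) => //; exists s.
    by move=> x [_ [s Ss <-] sx]; exists s.
  + by apply: bigcup_open => s _; exact: go_open.
- move=> a ca.
  have csa := compact_csu halgY ca.
  apply: csu_compact; apply: core_csu; first exact: (proj2_sig (gm a)).
  move=> x fx; apply: (proj2 hf _ (proj2_sig a)).
  by exists (proj1_sig a) => //; split.
Qed.

End Gm.

Section Iso.
Variables X Y : otop.
Variable f : X -> Y.
Variable g : Y -> X.
Hypotheses (fg : forall y, f (g y) = y) (gf : forall x, g (f x) = x).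
Hypotheses (cf : continuous f) (cg : continuous g).
Hypotheses (of_ : order_preserving f) (og : order_preserving g).

Lemma iso_closure (U : set Y) : f @^-1` closure U = closure (f @^-1` U).
Proof.
apply/seteqP; split => x.
  move=> clx; apply/closureP => B oB Bx.
  have oB' : open (g @^-1` B) by exact: ((continuousP g).1 cg B oB).
  have [u [Uu Bu]] := (closureP _ _).1 clx _ oB' (ltac:(by rewrite /= gf)).
  by exists (g u); rewrite /= fg.
move=> clx; apply/closureP => B oB Bx.
have oB' : open (f @^-1` B) by exact: ((continuousP f).1 cf B oB).
have [y [Uy By]] := (closureP _ _).1 clx _ oB' Bx.
by exists (f y).
Qed.

Lemma iso_csu (V : set Y) : @ClopSUp Y V -> @ClopSUp X (f @^-1` V).
Proof.
move=> [cV [clV uV mV]]; split; first exact: preimage_clopen.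
split; first by case: (preimage_clopen cV cf).
  by move=> x y Vx xy; apply: uV Vx _; exact: of_.
move=> m [Vm minm].
have mfm : @minimals Y V (f m).
  split => // z Vz zm.
  have e : g z = m by apply: minm; [rewrite /= fg|rewrite -(gf m); exact: og].
  by rewrite -e fg.
have [o c] := mV _ mfm.
rewrite /spatial_part /=.
have -> : @downset_of X [set m] = f @^-1` (@downset_of Y [set f m]).
  apply/seteqP; split.
    by move=> y [_ -> ym]; exists (f m) => //; exact: of_.
  move=> y [_ -> ym]; exists m => //; rewrite -(gf y) -(gf m); exact: og.
exact: preimage_clopen.
Qed.

Lemma iso_coherent : coherent_L_morphism f.
Proof.
split; first split => //.
  by move=> U _ _; exact: iso_closure.
move=> U _ x [V [csV VU] Vx].
exists (f @^-1` V) => //; split; first exact: iso_csu.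
by move=> y /VU.
Qed.

End Iso.


Section FrameFacts.
Variable L : frame.
Implicit Types (a b c x y : L) (S T : set L).

Definition fbot : L := fjoin (set0 : set L).
Definition jn a b : L := fjoin [set a; b].
Definition imp a b : L := fjoin [set c | fle (fmeet c a) b].

Lemma fle_meet a b : fle a b -> fmeet a b = a.
Proof.
move=> ab; apply: fle_anti; first exact: fmeet_lbl.
by apply: fmeet_greatest => //; exact: fle_refl.
Qed.

Lemma meet_fle a b : fmeet a b = a -> fle a b.
Proof. by move=> <-; exact: fmeet_lbr. Qed.

Lemma meetC a b : fmeet a b = fmeet b a.
Proof. by apply: fle_anti; apply: fmeet_greatest; try exact: fmeet_lbl; exact: fmeet_lbr. Qed.

Lemma meet_mono a b c : fle a b -> fle (fmeet a c) (fmeet b c).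
Proof.
move=> ab; apply: fmeet_greatest; last exact: fmeet_lbr.
exact: fle_trans (fmeet_lbl _ _) ab.
Qed.

Lemma bot_le a : fle fbot a.
Proof. by apply: fjoin_least => s []. Qed.

Lemma jn_l a b : fle a (jn a b). Proof. by apply: fjoin_ub; left. Qed.
Lemma jn_r a b : fle b (jn a b). Proof. by apply: fjoin_ub; right. Qed.
Lemma jn_least a b c : fle a c -> fle b c -> fle (jn a b) c.
Proof. by move=> ac bc; apply: fjoin_least => s [->|->]. Qed.

Lemma fjoin_mono S T : S `<=` T -> fle (fjoin S) (fjoin T).
Proof. by move=> ST; apply: fjoin_least => s /ST; exact: fjoin_ub. Qed.

Lemma distr2 c a b : fmeet c (jn a b) = jn (fmeet c a) (fmeet c b).
Proof.
rewrite /jn frame_distr; congr fjoin; apply/seteqP; split.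
  by move=> _ [s [->|->] <-]; [left|right].
by move=> _ [->|->]; [exists a; [left|]|exists b; [right|]].
Qed.

Lemma imp_intro c a b : fle (fmeet c a) b -> fle c (imp a b).
Proof. by move=> h; apply: fjoin_ub. Qed.

Lemma imp_elim a b : fle (fmeet (imp a b) a) b.
Proof.
rewrite meetC /imp frame_distr; apply: fjoin_least => _ [c hc <-].
by rewrite meetC.
Qed.

Definition is_pf (F : set L) : Prop :=
  [/\ F (ftop L), ~ F fbot, (forall a b, F a -> fle a b -> F b),
      (forall a b, F a -> F b -> F (fmeet a b)) &
      (forall a b, F (jn a b) -> F a \/ F b)].

Lemma pft (F0 I : set L) :
  F0 (ftop L) -> (forall a b, F0 a -> fle a b -> F0 b) ->
  (forall a b, F0 a -> F0 b -> F0 (fmeet a b)) ->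
  I fbot -> (forall a b, I b -> fle a b -> I a) ->
  (forall a b, I a -> I b -> I (jn a b)) ->
  (forall x, F0 x -> ~ I x) ->
  exists P, [/\ is_pf P, F0 `<=` P & forall x, P x -> ~ I x].
Proof.
move=> F0t F0u F0m Ib Id Ij dis.
pose good (A : set L) := [/\ F0 `<=` A, (forall a b, A a -> fle a b -> A b),
   (forall a b, A a -> A b -> A (fmeet a b)) & (forall x, A x -> ~ I x)].
pose Pset := [set A | A = set0 \/ good A].
have ch : forall F : set (set L), F `<=` Pset -> total_on F subset ->
    Pset (\bigcup_(X in F) X).
  move=> F FP tot.
  have [[A FA gA]|nA] := pselect (exists2 A, F A & good A); last first.
    left; apply/seteqP; split => // x [B FB Bx].
    case: (FP B FB) => [e|gB]; first by rewrite e in Bx.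
    by case: nA; exists B.
  have gB : forall B x, F B -> B x -> good B.
    move=> B x FB Bx; case: (FP B FB) => // e; by rewrite e in Bx.
  right; split.
  - by case: gA => F0A _ _ _ x /F0A Ax; exists A.
  - move=> a b [B FB Ba] ab; exists B => //.
    by have [_ h _ _] := gB B a FB Ba; exact: h ab.
  - move=> a b [B1 FB1 B1a] [B2 FB2 B2b].
    have [_ _ m1 _] := gB _ _ FB1 B1a; have [_ _ m2 _] := gB _ _ FB2 B2b.
    case: (tot _ _ FB1 FB2) => [s12|s21].
      by exists B2 => //; apply: m2 => //; exact: s12.
    by exists B1 => //; apply: m1 => //; exact: s21.
  - move=> x [B FB Bx]; have [_ _ _ h] := gB _ _ FB Bx; exact: h.
have [A [PA maxA]] := Zorn_bigcup ch.
have gF0 : good F0 by split.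
have gA : good A.
  case: PA => // e; exfalso; apply: (maxA F0); last by right.
  rewrite e; split => // h; by have := h _ F0t.
have [F0A Au Am AI] := gA.
have At : A (ftop L) by exact: F0A.
exists A; split => //; split => //.
- by move=> Ab; exact: AI Ab Ib.
- move=> a b Aab; apply: contrapT => /not_orP [na nb].
  have ext : forall d, ~ A d ->
      exists c, exists2 x, A c & fle (fmeet c d) x /\ I x.
    move=> d nd; apply: contrapT => hn.
    pose Ad := [set x | exists2 c, A c & fle (fmeet c d) x].
    apply: (maxA Ad).
      split.
        by move=> x Ax; exists x => //; exact: fmeet_lbl.
      by move=> h; apply: nd; apply: h; exists (ftop L) => //; exact: fmeet_lbr.
    right; split.
    - by move=> x /F0A Ax; exists x => //; exact: fmeet_lbl.
    - by move=> x y [c Ac cx] xy; exists c => //; exact: fle_trans cx xy.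
    - move=> x y [c1 A1 h1] [c2 A2 h2]; exists (fmeet c1 c2); first exact: Am.
      apply: fmeet_greatest.
        apply: fle_trans h1; apply: meet_mono; exact: fmeet_lbl.
      apply: fle_trans h2; apply: meet_mono; exact: fmeet_lbr.
    - move=> x [c Ac cx] Ix; apply: hn; exists c, x => //.
  have [c1 [x1 A1 [h1 I1]]] := ext _ na.
  have [c2 [x2 A2 [h2 I2]]] := ext _ nb.
  pose c := fmeet c1 c2.
  have Ac : A (fmeet c (jn a b)) by apply: (Am) => //; exact: (Am).
  apply: (AI _ Ac); apply: (Id _ (jn x1 x2)); first exact: Ij.
  rewrite distr2; apply: jn_least.
    apply: fle_trans (jn_l _ _); apply: fle_trans h1; apply: meet_mono; exact: fmeet_lbl.
  apply: fle_trans (jn_r _ _); apply: fle_trans h2; apply: meet_mono; exact: fmeet_lbr.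
Qed.

Lemma pf_sep a b : ~ fle a b -> exists P, [/\ is_pf P, P a & ~ P b].
Proof.
move=> nab.
have [P [pP sub dis]] := @pft [set x | fle a x] [set x | fle x b]
  (ftop_greatest a) (fun x y ax xy => fle_trans ax xy)
  (fun x y ax ay => fmeet_greatest ax ay) (bot_le b)
  (fun x y yb xy => fle_trans xy yb) (fun x y xb yb => jn_least xb yb)
  (fun x ax xb => nab (fle_trans ax xb)).
exists P; split => //; first exact: sub (fle_refl a).
by move=> Pb; apply: (dis b Pb); exact: fle_refl.
Qed.

Lemma fle_pf a b : (forall P, is_pf P -> P a -> P b) -> fle a b.
Proof.
move=> h; apply: contrapT => /pf_sep [P [pP Pa nPb]]; apply: nPb; exact: h.
Qed.

Lemma pf_imp (G : set L) a b : is_pf G -> ~ G (imp a b) ->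
  exists H, [/\ is_pf H, G `<=` H, H a & ~ H b].
Proof.
move=> [Gt Gb Gu Gm Gp] nG.
have [P [pP sub dis]] := @pft [set x | exists2 g, G g & fle (fmeet g a) x]
  [set x | fle x b]
  (ltac:(by exists (ftop L) => //; exact: ftop_greatest))
  (fun x y '(ex_intro2 g Gg h) xy => ex_intro2 _ _ g Gg (fle_trans h xy))
  (ltac:(move=> x y [g1 G1 h1] [g2 G2 h2]; exists (fmeet g1 g2); first exact: Gm;
         apply: fmeet_greatest; [apply: fle_trans h1 | apply: fle_trans h2];
         apply: meet_mono; [exact: fmeet_lbl|exact: fmeet_lbr]))
  (bot_le b) (fun x y yb xy => fle_trans xy yb) (fun x y xb yb => jn_least xb yb)
  (ltac:(move=> x [g Gg h] xb; apply: nG; apply: (Gu g) => //;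
         apply: imp_intro; exact: fle_trans h xb)).
exists P; split => //.
- move=> g Gg; apply: sub; exists g => //; exact: fmeet_lbl.
- apply: sub; exists (ftop L) => //; exact: fmeet_lbr.
- by move=> Pb; apply: (dis b Pb); exact: fle_refl.
Qed.

Lemma pf_fin (F : set L) (T : set L) : is_pf F -> finite_set T -> F (fjoin T) ->
  exists t, T t /\ F t.
Proof.
move=> [Ft Fb Fu Fm Fp] fT; pattern T; apply: (fin_ind _ _ fT).
  by move=> h; exfalso; exact: Fb h.
move=> x A IH hF.
have : F (jn x (fjoin A)).
  apply: Fu hF _; apply: fjoin_least => s [->|As]; first exact: jn_l.
  apply: fle_trans (jn_r _ _); exact: fjoin_ub.
case/Fp => [Fx|/IH [t [At Ft']]]; first by exists x; split => //; left.
by exists t; split => //; right.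
Qed.

Lemma pf_cp (F : set L) k : is_pf F -> fcompact k -> F k ->
  (forall G, is_pf G -> G k -> G `<=` F -> G = F) ->
  forall S, F (fjoin S) -> exists s, S s /\ F s.
Proof.
move=> pF ck Fk minF S FS; apply: contrapT => nS.
have [Ft Fb Fu Fm Fp] := pF.
pose I := [set x | exists2 b, ~ F b & fle x (fjoin (b |` S))].
have Ib : I fbot by exists fbot => //; exact: bot_le.
have Id : forall a b, I b -> fle a b -> I a.
  by move=> a b [c nc h] ab; exists c => //; exact: fle_trans ab h.
have Ij : forall a b, I a -> I b -> I (jn a b).
  move=> a b [c1 n1 h1] [c2 n2 h2]; exists (jn c1 c2).
    by case/Fp.
  apply: jn_least.
    apply: fle_trans h1 _; apply: fjoin_least => s [->|Ss].
      apply: fle_trans (jn_l c1 c2) _; apply: fjoin_ub; by left.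
    by apply: fjoin_ub; right.
  apply: fle_trans h2 _; apply: fjoin_least => s [->|Ss].
    apply: fle_trans (jn_r c1 c2) _; apply: fjoin_ub; by left.
  by apply: fjoin_ub; right.
have dis : forall x, fle k x -> ~ I x.
  move=> x kx [b nb xb].
  have [T [fT TS kT]] := ck (b |` S) (fle_trans kx xb).
  have [t [Tt Ftt]] := pf_fin pF fT (Fu _ _ Fk kT).
  case: (TS t Tt) => [e|St]; first by apply: nb; rewrite -e.
  by apply: nS; exists t.
have [P [pP sub disP]] := @pft [set x | fle k x] I
  (ftop_greatest k) (fun x y ax xy => fle_trans ax xy)
  (fun x y ax ay => fmeet_greatest ax ay) Ib Id Ij dis.
have PF : P `<=` F.
  move=> x Px; apply: contrapT => nx; apply: (disP x Px); exists x => //.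
  by apply: fjoin_ub; left.
have e := minF P pP (sub _ (fle_refl k)) PF.
rewrite -e in FS; apply: (disP _ FS); exists fbot => //.
by apply: fjoin_mono => s Ss; right.
Qed.

End FrameFacts.

Section Hom.
Variables L M : frame.

Lemma hom_mono (h : L -> M) : frame_hom h -> forall a b, fle a b -> fle (h a) (h b).
Proof.
move=> [hm _ _] a b ab; apply: meet_fle; rewrite -hm; congr h; exact: fle_meet.
Qed.

Lemma hom_bot (h : L -> M) : frame_hom h -> h (fbot L) = fbot M.
Proof. by move=> [_ _ hj]; rewrite /fbot hj image_set0. Qed.

Lemma hom_jn (h : L -> M) : frame_hom h -> forall a b, h (jn a b) = jn (h a) (h b).
Proof.
move=> [_ _ hj] a b; rewrite /jn hj; congr fjoin; apply/seteqP; split.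
  by move=> _ [s [->|->] <-]; [left|right].
by move=> _ [->|->]; [exists a; [left|]|exists b; [right|]].
Qed.

Lemma compact_transfer (h : L -> M) : frame_hom h ->
  (forall a b, fle (h a) (h b) -> fle a b) -> (forall m, exists a, h a = m) ->
  forall k, fcompact k -> fcompact (h k).
Proof.
move=> hh refl surj k ck S hS.
have [_ _ hj] := hh.
have eS : h @` (h @^-1` S) = S.
  apply/seteqP; split; first by move=> _ [a Sa <-].
  by move=> m Sm; have [a ea] := surj m; exists a => //; rewrite /preimage /= ea.
have : fle k (fjoin (h @^-1` S)) by apply: refl; rewrite hj eS.
move=> /ck [T [fT TS kT]].
exists (h @` T); split.
- exact: finite_image.
- by move=> _ [t Tt <-]; exact: TS.
- by rewrite -hj; exact: hom_mono.
Qed.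

End Hom.

Lemma inv_hom (L M : frame) (h : L -> M) (g : M -> L) : frame_hom h ->
  (forall a, g (h a) = a) -> (forall b, h (g b) = b) -> frame_hom g.
Proof.
move=> [hm ht hj] gh hg; split.
- by move=> a b; rewrite -{1}(hg a) -{1}(hg b) -hm gh.
- by rewrite -ht gh.
- move=> S.
  have eS : h @` (g @` S) = S.
    apply/seteqP; split; first by move=> _ [_ [s Ss <-] <-]; rewrite hg.
    by move=> s Ss; exists (g s); [exists s|rewrite hg].
  by rewrite -{1}eS -hj gh.
Qed.

Lemma iso_coh (L M : frame) (h : L -> M) (g : M -> L) : frame_hom h ->
  (forall a, g (h a) = a) -> (forall b, h (g b) = b) ->
  coherent_frame_hom h /\ coherent_frame_hom g.
Proof.
move=> hh gh hg.
have hg' := inv_hom hh gh hg.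
split; split => //.
- apply: compact_transfer => //.
    by move=> a b /(hom_mono hg'); rewrite !gh.
  by move=> m; exists (g m).
- apply: compact_transfer => //.
    by move=> a b /(hom_mono hh); rewrite !hg.
  by move=> m; exists (h m).
Qed.


Record pfpt (L : frame) := PfPt { pfs : set L; pfP : is_pf pfs }.

HB.instance Definition _ (L : frame) := gen_eqMixin (pfpt L).
HB.instance Definition _ (L : frame) := gen_choiceMixin (pfpt L).

Definition pfop (L : frame) (A : set (pfpt L)) : Prop :=
  forall G, A G -> exists a b,
    [/\ pfs G a, ~ pfs G b & forall H, pfs H a -> ~ pfs H b -> A H].

Lemma pfopT (L : frame) : pfop (setT : set (pfpt L)).
Proof.
move=> G _; exists (ftop L), (fbot L); split => //.
  by case: (pfP G).
by case: (pfP G).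
Qed.

Lemma pfopI (L : frame) : setI_closed (@pfop L).
Proof.
move=> A B oA oB G [AG BG].
have [a1 [b1 [G1 nG1 h1]]] := oA G AG.
have [a2 [b2 [G2 nG2 h2]]] := oB G BG.
have [Gt Gb Gu Gm Gp] := pfP G.
exists (fmeet a1 a2), (jn b1 b2); split.
- exact: Gm.
- by case/Gp.
- move=> H Ha Hb; have [Ht Hbt Hu Hm Hp] := pfP H; split.
    apply: h1; first exact: Hu Ha (fmeet_lbl _ _).
    by move=> hb; apply: Hb; apply: Hu hb (jn_l _ _).
  apply: h2; first exact: Hu Ha (fmeet_lbr _ _).
  by move=> hb; apply: Hb; apply: Hu hb (jn_r _ _).
Qed.

Lemma pfop_bigU (L : frame) (I : Type) (f : I -> set (pfpt L)) :
  (forall i, pfop (f i)) -> pfop (\bigcup_i f i).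
Proof.
move=> h G [i _ fiG]; have [a [b [Ga nGb hab]]] := h i G fiG.
exists a, b; split => // H Ha Hb; exists i => //; exact: hab.
Qed.

HB.instance Definition _ (L : frame) :=
  isOpenTopological.Build (pfpt L) (@pfopT L) (@pfopI L) (@pfop_bigU L).

Section PFspace.
Variable L : frame.

Lemma pf_openE (A : set (pfpt L)) : open A = pfop A.
Proof. by []. Qed.

Lemma pfle_refl (G : pfpt L) : pfs G `<=` pfs G. Proof. by []. Qed.
Lemma pfle_anti (G H : pfpt L) : pfs G `<=` pfs H -> pfs H `<=` pfs G -> G = H.
Proof.
case: G H => [G pG] [H pH] /= GH HG.
have e : G = H by apply/seteqP; split.
subst H; congr PfPt; exact: Prop_irrelevance.
Qed.
Lemma pfle_trans (G H K : pfpt L) : pfs G `<=` pfs H -> pfs H `<=` pfs K -> pfs G `<=` pfs K.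
Proof. by move=> a b x /a /b. Qed.

End PFspace.

Definition PFo (L : frame) : otop :=
  @OTop (pfpt L) (fun G H => pfs G `<=` pfs H)
    (@pfle_refl L) (@pfle_anti L) (@pfle_trans L).

Section PF2.
Variable L : frame.
Implicit Types (a b c k : L).

Definition phi a : set (PFo L) := [set G | pfs G a].

Lemma phi_meet a b : phi (fmeet a b) = phi a `&` phi b.
Proof.
apply/seteqP; split => G; have [Gt Gb Gu Gm Gp] := pfP G.
  by move=> h; split; [exact: Gu h (fmeet_lbl _ _)|exact: Gu h (fmeet_lbr _ _)].
by move=> [ha hb]; exact: Gm.
Qed.

Lemma phi_jn a b : phi (jn a b) = phi a `|` phi b.
Proof.
apply/seteqP; split => G; have [Gt Gb Gu Gm Gp] := pfP G.
  by move=> /Gp.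
by move=> [ha|hb]; [exact: Gu ha (jn_l _ _)|exact: Gu hb (jn_r _ _)].
Qed.

Lemma phi_top : phi (ftop L) = setT.
Proof. by apply/seteqP; split => // G _; case: (pfP G). Qed.

Lemma phi_bot : phi (fbot L) = set0.
Proof. by apply/seteqP; split => // G; case: (pfP G). Qed.

Lemma phi_open a : open (phi a).
Proof.
rewrite pf_openE => G Ga; exists a, (fbot L); split => //.
by case: (pfP G).
Qed.

Lemma phiC_open a : open (~` phi a).
Proof.
rewrite pf_openE => G Ga; exists (ftop L), a; split => //.
by case: (pfP G).
Qed.

Lemma phi_closed a : closed (phi a).
Proof. by rewrite -[phi a]setCK closedC; exact: phiC_open. Qed.

Lemma phi_clopen a : clopen (phi a).
Proof. split; [exact: phi_open|exact: phi_closed]. Qed.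

Lemma phi_upset a : upset (phi a).
Proof. by move=> G H Ga GH; exact: GH. Qed.

Lemma phi_cu a : @ClopUp (PFo L) (phi a).
Proof. split; [exact: phi_clopen|exact: phi_upset]. Qed.

Lemma phi_le a b : phi a `<=` phi b -> fle a b.
Proof. by move=> h; apply: fle_pf => P pP Pa; exact: (h (PfPt pP)). Qed.

Lemma le_phi a b : fle a b -> phi a `<=` phi b.
Proof. by move=> ab G Ga; case: (pfP G) => _ _ u _ _; exact: u Ga ab. Qed.

Lemma phi_inj a b : phi a = phi b -> a = b.
Proof. by move=> e; apply: fle_anti; apply: phi_le; rewrite e. Qed.

Lemma pf_nbhs (G : PFo L) (B : set (PFo L)) : open B -> B G ->
  exists a b, [/\ pfs G a, ~ pfs G b & phi a `\` phi b `<=` B].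
Proof.
rewrite pf_openE => oB BG; have [a [b [Ga Gb h]]] := oB G BG.
by exists a, b; split => // H [Ha Hb]; exact: h.
Qed.

Lemma pf_compact : compact [set: PFo L].
Proof.
rewrite compact_ultra => F UF _.
pose P := [set a | F (phi a)].
have pP : is_pf P.
  split.
  - by rewrite /P /= phi_top; exact: filterT.
  - by rewrite /P /= phi_bot => /filter_ex [].
  - by move=> a b Fa ab; apply: filterS Fa; exact: le_phi.
  - by move=> a b Fa Fb; rewrite /P /= phi_meet; exact: filterI.
  - move=> a b; rewrite /P /= phi_jn => Fab.
    case: (in_ultra_setVsetC (phi a) UF) => [|Fna]; first by left.
    case: (in_ultra_setVsetC (phi b) UF) => [|Fnb]; first by right.
    have : F ((phi a `|` phi b) `&` (~` phi a `&` ~` phi b)).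
      by apply: filterI => //; exact: filterI.
    by move=> /filter_ex [G [[Ga|Gb] [na nb]]].
exists (PfPt pP); split => //.
move=> B /nbhsP [B' [oB' B'G] sB]; change (F B).
have [a [b [Ga nGb sub]]] := pf_nbhs oB' B'G.
apply: (@filterS _ F _ B' B sB); apply: (@filterS _ F _ _ B' sub).
case: (in_ultra_setVsetC (phi b) UF) => Fb; first by exfalso; exact: nGb.
exact: filterI.
Qed.

Lemma pf_sep_pts (G H : PFo L) : G <> H ->
  exists a, (pfs G a /\ ~ pfs H a) \/ (pfs H a /\ ~ pfs G a).
Proof.
move=> nGH; apply: contrapT => h; apply: nGH; apply: pfle_anti.
  move=> a Ga; apply: contrapT => nHa; apply: h; exists a; by left.
move=> a Ha; apply: contrapT => nGa; apply: h; exists a; by right.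
Qed.

Lemma pf_zero_dim : zero_dimensional (PFo L).
Proof.
move=> G H /eqP /pf_sep_pts [a [[Ga nHa]|[Ha nGa]]].
  by exists (phi a); split => //; exact: phi_clopen.
exists (~` phi a); split => //.
exact: (@clopenC _ _ (phi a) (phi_clopen a)).
Qed.

Lemma pf_hausdorff : hausdorff_space (PFo L).
Proof.
rewrite open_hausdorff => G H /eqP /pf_sep_pts [a [[Ga nHa]|[Ha nGa]]].
  exists (phi a, ~` phi a); first by split; apply/mem_set.
  split; [exact: phi_open|exact: phiC_open|].
  by apply/eqP/seteqP; split => // x [].
exists (~` phi a, phi a); first by split; apply/mem_set.
split; [exact: phiC_open|exact: phi_open|].
by apply/eqP/seteqP; split => // x [].
Qed.

Lemma pf_priestley : priestley_space (PFo L).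
Proof.
split.
  split; [exact: pf_compact|exact: pf_hausdorff|].
  exact: zero_dimension_totally_disconnected pf_zero_dim.
move=> G H nGH.
have [a Ga nHa] : exists2 a, pfs G a & ~ pfs H a.
  apply: contrapT => h; apply: nGH => a Ga; apply: contrapT => nHa; apply: h.
  by exists a.
by exists (phi a); split => //; [exact: phi_clopen|exact: phi_upset].
Qed.

End PF2.

Arguments phi_closed [L] a.
Arguments phi_open [L] a.
Arguments phiC_open [L] a.


Section PF3.
Variable L : frame.
Implicit Types (a b c k : L).

Lemma pf_down_open (A : set (PFo L)) : open A -> open (@downset_of (PFo L) A).
Proof.
move=> oA; rewrite pf_openE => G [H AH GH].
have [a [b [Ha nHb sub]]] := pf_nbhs oA AH.
have nGi : ~ pfs G (imp a b).
  move=> Gi; have [_ _ Hu Hm _] := pfP H.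
  apply: nHb; apply: Hu (imp_elim a b); apply: Hm => //; exact: GH.
exists (ftop L), (imp a b); split => //; first by case: (pfP G).
move=> H' _ nH'.
have [K [pK H'K Ka nKb]] := pf_imp (pfP H') nH'.
by exists (PfPt pK); [apply: sub|].
Qed.

Lemma pf_upset_basis (U : set (PFo L)) G : open U -> upset U -> U G ->
  exists2 a, pfs G a & phi a `<=` U.
Proof.
move=> oU uU UG; apply: contrapT => nex.
pose C := [set phi a `&` ~` U | a in pfs G].
have [Gt Gb Gu Gm Gp] := pfP G.
have [x _ hx] := @fip _ setT C (@pf_compact L)
  (ltac:(move=> _ [a _ <-]; apply: closedI; [exact: phi_closed|exact: open_closedC]))
  (ltac:(by exists (phi (ftop L) `&` ~` U); exists (ftop L)))
  (ltac:(move=> _ _ [a1 G1 <-] [a2 G2 <-]; exists (phi (fmeet a1 a2) `&` ~` U);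
    [by exists (fmeet a1 a2); [exact: Gm|]|
     by rewrite phi_meet => y [[y1 y2] ny]]))
  (ltac:(move=> _ [a Ga <-]; apply: contrapT => /set0P/negP; rewrite negbK => /eqP e;
    apply: nex; exists a => // y ay; apply: contrapT => ny;
    have : (setT `&` (phi a `&` ~` U)) y by []; by rewrite e)).
have Gx : pfs G `<=` pfs x.
  by move=> a Ga; have [] := hx (phi a `&` ~` U) (ex_intro2 _ _ a Ga erefl).
have := hx (phi (ftop L) `&` ~` U) (ex_intro2 _ _ (ftop L) Gt erefl).
by move=> [_ nUx]; apply: nUx; exact: uU UG Gx.
Qed.

Lemma pf_upset_union (U : set (PFo L)) : open U -> upset U ->
  U = \bigcup_(a in [set a | phi a `<=` U]) phi a.
Proof.
move=> oU uU; apply/seteqP; split.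
  by move=> G UG; have [a Ga sub] := pf_upset_basis oU uU UG; exists a.
by move=> G [a sub Ga]; exact: sub.
Qed.

Lemma pf_closure_phi (S : set L) :
  closure (\bigcup_(a in S) phi a) = phi (fjoin S).
Proof.
apply/seteqP; split.
  rewrite -[X in _ `<=` X](closed_closure_eq (phi_closed (fjoin S))).
  apply: closureS => G [a Sa Ga]; apply: le_phi Ga; exact: fjoin_ub.
move=> G GS; apply/closureP => B oB BG.
have [c [d [Gc nGd sub]]] := pf_nbhs oB BG.
have [s Ss ns] : exists2 s, S s & ~ fle (fmeet c s) d.
  apply: contrapT => nex; apply: nGd.
  have [_ _ Gu Gm _] := pfP G.
  apply: Gu (Gm _ _ Gc GS) _; rewrite frame_distr; apply: fjoin_least.
  move=> _ [s Ss <-]; apply: contrapT => h; apply: nex; by exists s.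
have [P [pP Pcs nPd]] := pf_sep ns.
have [_ _ Pu _ _] := pP.
exists (PfPt pP); split.
  exists s => //; exact: Pu Pcs (fmeet_lbr _ _).
apply: sub; split => //; exact: Pu Pcs (fmeet_lbl _ _).
Qed.

Lemma pf_L_space : L_space (PFo L).
Proof.
split; first exact: pf_priestley.
  move=> U [oU cU]; split; first exact: pf_down_open.
  exact: (@pr_down_closed (PFo L) (@pf_priestley L) U cU).
move=> U oU uU; rewrite (pf_upset_union oU uU) pf_closure_phi; exact: phi_open.
Qed.

Lemma pf_cu_phi (U : set (PFo L)) : @ClopUp (PFo L) U -> exists a, U = phi a.
Proof.
move=> [[oU cU] uU]; exists (fjoin [set a | phi a `<=` U]).
by rewrite -pf_closure_phi -(pf_upset_union oU uU) closed_closure_eq.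
Qed.

Lemma cp_spatial (G : PFo L) :
  (forall S, pfs G (fjoin S) -> exists s, S s /\ pfs G s) -> @spatial_part (PFo L) G.
Proof.
move=> cp.
have [Gt Gb Gu Gm Gp] := pfP G.
pose c := fjoin (~` pfs G).
rewrite /spatial_part /=.
have -> : @downset_of (PFo L) [set G] = ~` phi c.
  apply/seteqP; split.
    move=> H [_ -> HG] Hc; have [s [ns Gs]] := cp _ (HG _ Hc); exact: ns Gs.
  move=> H nHc; exists G => // x Hx; apply: contrapT => nx; apply: nHc.
  have [_ _ Hu _ _] := pfP H; apply: Hu Hx _; exact: fjoin_ub.
exact: (@clopenC _ _ (phi c) (phi_clopen c)).
Qed.

Lemma phi_csu k : fcompact k -> @ClopSUp (PFo L) (phi k).
Proof.
move=> ck; split; first exact: phi_clopen.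
split; [exact: phi_closed|exact: phi_upset|].
move=> m [mk minm]; apply: cp_spatial; apply: (pf_cp (pfP m) ck mk).
move=> G pG Gk Gm; have := minm (PfPt pG) Gk Gm.
by move=> /(congr1 (@pfs L)).
Qed.

Lemma pf_alg : algebraic_frame L -> algebraic_L_space (PFo L).
Proof.
move=> hA; split; first exact: pf_L_space.
move=> U /pf_cu_phi [a ->].
rewrite {1}(hA a) -pf_closure_phi; apply: closureS.
move=> G [b [cb ba] Gb]; exists (phi b) => //; split; first exact: phi_csu.
exact: le_phi.
Qed.

End PF3.


Lemma pfpt_ext (L : frame) (G H : pfpt L) : pfs G = pfs H -> G = H.
Proof. by move=> e; apply: pfle_anti; rewrite e. Qed.

Section Eta.
Variable L : frame.
Variable hL : L_space (PFo L).

Definition eta_f (a : L) : Go_frame hL := exist _ (phi a) (phi_cu a).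

Lemma eta_hom : frame_hom eta_f.
Proof.
split.
- by move=> a b; apply: sig_eq; rewrite /= phi_meet.
- by apply: sig_eq; rewrite /= phi_top.
- move=> S; apply: sig_eq; rewrite /= -pf_closure_phi; congr closure.
  apply/seteqP; split.
    by move=> G [a Sa Ga]; exists (eta_f a) => //; exists a.
  by move=> G [_ [a Sa <-] Ga]; exists a.
Qed.

Definition eta_inv (U : Go_frame hL) : L := proj1_sig (cid (pf_cu_phi (proj2_sig U))).

Lemma eta_inv_spec U : proj1_sig U = phi (eta_inv U).
Proof. exact: (proj2_sig (cid (pf_cu_phi (proj2_sig U)))). Qed.

Lemma eta_inv_l a : eta_inv (eta_f a) = a.
Proof. by apply: phi_inj; rewrite -eta_inv_spec. Qed.

Lemma eta_inv_r U : eta_f (eta_inv U) = U.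
Proof. by apply: sig_eq; rewrite /= -eta_inv_spec. Qed.

Lemma eta_coh : coherent_frame_hom eta_f /\ coherent_frame_hom eta_inv.
Proof. exact: iso_coh eta_hom eta_inv_l eta_inv_r. Qed.

Lemma csu_phi_compact k : @ClopSUp (PFo L) (phi k) -> fcompact k.
Proof.
move=> h; have c : fcompact (eta_f k) := csu_compact (v := eta_f k) h.
have := (proj2 (proj2 eta_coh)) _ c; by rewrite eta_inv_l.
Qed.

End Eta.

Section Fm.
Variables L M : frame.
Variable h : L -> M.
Hypothesis hc : coherent_frame_hom h.

Let hh : frame_hom h := proj1 hc.

Lemma pf_pre (G : set M) : is_pf G -> is_pf (h @^-1` G).
Proof.
move=> [Gt Gb Gu Gm Gp]; have [hm ht hj] := hh; split.
- by rewrite /preimage /= ht.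
- by rewrite /preimage /= (hom_bot hh).
- move=> a b Ga ab; apply: Gu Ga _; exact: hom_mono hh _ _ ab.
- by move=> a b Ga Gb'; rewrite /preimage /= hm; exact: Gm.
- by move=> a b; rewrite /preimage /= (hom_jn hh); exact: Gp.
Qed.

Definition fm (G : PFo M) : PFo L := PfPt (pf_pre (pfP G)).

Lemma fm_cont : continuous fm.
Proof.
apply/continuousP => A; rewrite !pf_openE => oA G AG.
have [a [b [Ga nGb hab]]] := oA _ AG.
exists (h a), (h b); split => // H Ha Hb; exact: hab.
Qed.

Lemma fm_op : order_preserving fm.
Proof. by move=> G H GH a; exact: GH. Qed.

Lemma fm_L : L_morphism fm.
Proof.
split; [exact: fm_cont|exact: fm_op|].
move=> U oU uU.
set S := [set a | phi a `<=` U].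
have eU : U = \bigcup_(a in S) phi a := pf_upset_union oU uU.
rewrite eU pf_closure_phi.
have -> : fm @^-1` (\bigcup_(a in S) phi a) = \bigcup_(b in h @` S) phi b.
  apply/seteqP; split.
    by move=> G [a Sa Ga]; exists (h a) => //; exists a.
  by move=> G [_ [a Sa <-] Ga]; exists a.
rewrite pf_closure_phi.
have [_ _ hj] := hh.
by rewrite -hj.
Qed.

Lemma fm_coh : coherent_L_morphism fm.
Proof.
split; first exact: fm_L.
move=> U cU G [V [csV VU] VG].
have cuV : @ClopUp (PFo L) V by case: csV => -[oV cV] [_ uV _]; split.
have [k ek] := pf_cu_phi cuV.
rewrite ek in csV VU VG.
have ck : fcompact k := csu_phi_compact (pf_L_space L) csV.
have chk : fcompact (h k) := proj2 hc k ck.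
exists (phi (h k)); last exact: VG.
split; first exact: phi_csu.
by move=> H Hk; apply: VU.
Qed.

End Fm.

Section Eps.
Variable X : otop.
Variable hL : L_space X.

Lemma go_bot_val : proj1_sig (fbot (Go_frame hL)) = set0.
Proof. by rewrite /= bigcup_set0 closure0. Qed.

Lemma go_jn_val (U V : Go_frame hL) :
  proj1_sig (jn U V) = proj1_sig U `|` proj1_sig V.
Proof.
rewrite /= closed_closure_eq.
  apply/seteqP; split.
    by move=> x [s [->|->] sx]; [left|right].
  by move=> x [Ux|Vx]; [exists U => //; left|exists V => //; right].
have -> : \bigcup_(s in [set U; V]) proj1_sig s = proj1_sig U `|` proj1_sig V.
  apply/seteqP; split.
    by move=> x [s [->|->] sx]; [left|right].
  by move=> x [Ux|Vx]; [exists U => //; left|exists V => //; right].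
apply: closedU; exact: go_closed.
Qed.

Lemma eps_pf (x : X) : is_pf [set U : Go_frame hL | proj1_sig U x].
Proof.
split.
- by [].
- move=> h; suff : (set0 : set X) x by []; rewrite -go_bot_val; exact: h.
- by move=> a b ax ab; exact: ab.
- by move=> a b ax bx; split.
- move=> a b h; have : (proj1_sig a `|` proj1_sig b) x by rewrite -go_jn_val; exact: h.
  by case; [left|right].
Qed.

Definition eps_f (x : X) : PFo (Go_frame hL) := PfPt (eps_pf x).

Lemma eps_refl x y : pfs (eps_f x) `<=` pfs (eps_f y) -> ole x y.
Proof.
move=> h; apply: contrapT => /(pr_sep (ls_pr hL)) [U [cU Ux nUy]].
by apply: nUy; exact: (h (exist _ U cU)).
Qed.

Lemma eps_inj x y : eps_f x = eps_f y -> x = y.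
Proof. by move=> e; apply: ole_anti; apply: eps_refl; rewrite e. Qed.

Lemma eps_op : order_preserving eps_f.
Proof. by move=> x y xy U Ux; exact: (@go_upset _ U) Ux xy. Qed.

Lemma eps_cont : continuous eps_f.
Proof.
apply/continuousP => A; rewrite pf_openE => oA; apply: openP => x Ax.
have [a [b [ax nbx hab]]] := oA _ Ax.
exists (proj1_sig a `&` ~` proj1_sig b).
  split; last by split.
  by apply: openI; [exact: go_open|apply: closed_openC; exact: go_closed].
by move=> y [ay nby]; exact: hab.
Qed.

Lemma eps_surj (P : PFo (Go_frame hL)) : exists x, eps_f x = P.
Proof.
have [Pt Pb Pu Pm Pp] := pfP P.
pose C := [set c | exists U W, [/\ pfs P U, ~ pfs P W & c = proj1_sig U `&` ~` proj1_sig W]].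
have h1 : forall c, C c -> closed c.
  move=> _ [U [W [_ _ ->]]]; apply: closedI; first exact: go_closed.
  apply: open_closedC; exact: go_open.
have h2 : exists c, C c.
  exists (proj1_sig (ftop (Go_frame hL)) `&` ~` proj1_sig (fbot (Go_frame hL))).
  by exists (ftop _), (fbot _).
have h3 : forall c1 c2, C c1 -> C c2 -> exists2 c3, C c3 & c3 `<=` c1 `&` c2.
  move=> _ _ [U1 [W1 [P1 n1 ->]]] [U2 [W2 [P2 n2 ->]]].
  exists (proj1_sig (fmeet U1 U2) `&` ~` proj1_sig (jn W1 W2)).
    exists (fmeet U1 U2), (jn W1 W2); split => //; [exact: Pm|by case/Pp].
  rewrite go_jn_val => y [[y1 y2] ny]; split; split => // h; apply: ny; by [left|right].
have h4 : forall c, C c -> setT `&` c !=set0.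
  move=> _ [U [W [PU nW ->]]]; apply: contrapT => /set0P/negP.
  rewrite negbK => /eqP e; apply: nW; apply: Pu PU _ => y Uy.
  apply: contrapT => nWy; have : (setT `&` (proj1_sig U `&` ~` proj1_sig W)) y by [].
  by rewrite e.
have [x _ hx] := @fip _ setT C (pr_compact (ls_pr hL)) h1 h2 h3 h4.
exists x; apply: pfpt_ext; apply/seteqP; split.
  move=> U Ux; apply: contrapT => nU.
  have := hx (proj1_sig (ftop (Go_frame hL)) `&` ~` proj1_sig U).
  by case; [exists (ftop _), U|].
move=> U PU; have := hx (proj1_sig U `&` ~` proj1_sig (fbot (Go_frame hL))).
by case; [exists U, (fbot _)|].
Qed.

Definition eps_inv (P : PFo (Go_frame hL)) : X := proj1_sig (cid (eps_surj P)).

Lemma eps_inv_r P : eps_f (eps_inv P) = P.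
Proof. exact: (proj2_sig (cid (eps_surj P))). Qed.

Lemma eps_inv_l x : eps_inv (eps_f x) = x.
Proof. by apply: eps_inj; rewrite eps_inv_r. Qed.

Lemma eps_inv_op : order_preserving eps_inv.
Proof.
move=> P Q PQ; apply: eps_refl; rewrite !eps_inv_r; exact: PQ.
Qed.

Lemma eps_inv_cont : continuous eps_inv.
Proof.
apply/continuousP => O oO; rewrite pf_openE => P OP.
have [V [W [cV cW Vx nWx sub]]] := pr_basis (ls_pr hL) oO OP.
have ePP := eps_inv_r P.
exists (exist _ V cV : Go_frame hL), (exist _ W cW : Go_frame hL); split.
- by rewrite -ePP.
- by rewrite -ePP.
- move=> H HV HW; apply: sub; rewrite -(eps_inv_r H) in HV HW; by split.
Qed.

Lemma eps_coh : coherent_L_morphism eps_f.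
Proof.
exact: (iso_coherent eps_inv_r eps_inv_l eps_cont eps_inv_cont eps_op eps_inv_op).
Qed.

Lemma eps_inv_coh : coherent_L_morphism eps_inv.
Proof.
exact: (iso_coherent eps_inv_l eps_inv_r eps_inv_cont eps_cont eps_inv_op eps_op).
Qed.

End Eps.


Definition Fo (L : AlgFrm) : AlgLPries := @AlgLPriesOb (PFo L) (pf_alg (@af_alg L)).

Definition Fm (L M : AlgFrm) (h : AlgFrm_hom L M) : AlgLPries_hom (Fo M) (Fo L) :=
  exist _ (fm (proj2_sig h)) (fm_coh (proj2_sig h)).

Definition Gob (X : AlgLPries) : AlgFrm := Go_alg X.

Definition Gm (X Y : AlgLPries) (f : AlgLPries_hom X Y) : AlgFrm_hom (Gob Y) (Gob X) :=
  exist _ (@gm X Y (proj1 (@al_alg X)) (proj1 (@al_alg Y)) _ (proj2_sig f))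
    (gm_hom (proj1 (@al_alg X)) (proj1 (@al_alg Y)) (@al_alg Y) (proj2_sig f)).

Definition eta (L : AlgFrm) : AlgFrm_hom L (Gob (Fo L)) :=
  exist _ (eta_f (proj1 (@al_alg (Fo L)))) (proj1 (eta_coh (proj1 (@al_alg (Fo L))))).

Definition eps (X : AlgLPries) : AlgLPries_hom X (Fo (Gob X)) :=
  exist _ (eps_f (proj1 (@al_alg X))) (eps_coh (proj1 (@al_alg X))).

Theorem theorem4p9 : dually_equivalent_AlgFrm_AlgLPries.
Proof.
exists Fo, Fm, Gob, Gm, eta, eps; split.
- split.
  + move=> L i hi x; apply: pfpt_ext; apply/seteqP; split => a /=;
      rewrite /preimage /= hi //.
  + move=> L M N h k kh e x; apply: pfpt_ext; apply/seteqP; split => a /=;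
      rewrite /preimage /= e //.
- split.
  + move=> X i hi a; apply: sig_eq; apply/seteqP; split => x /=;
      rewrite /preimage /= hi //.
  + move=> X Y Z f g gf e a; apply: sig_eq; apply/seteqP; split => x /=;
      rewrite /preimage /= e //.
- split.
  + move=> L; exists (exist _ (eta_inv (hL := proj1 (@al_alg (Fo L))))
                       (proj2 (eta_coh (proj1 (@al_alg (Fo L)))))).
    split; [exact: eta_inv_l|exact: eta_inv_r].
  + by move=> L M h a; apply: sig_eq.
- split.
  + move=> X; exists (exist _ (eps_inv (hL := proj1 (@al_alg X)))
                       (eps_inv_coh (proj1 (@al_alg X)))).
    split; [exact: eps_inv_l|exact: eps_inv_r].
  + by move=> X Y f x; apply: pfpt_ext.
Qed.
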